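(* Let $\lambda>0$, $d_v>0$, $\epsilon\ge0$, $m=\lambda\pi d_v^2$, $k\ge0$, and let $r_1,\dots,r_k\ge0$ be given ranges (the observed ranges $r_i=\|\tilde{\mathbf x}_i\|_2$ at $\mathbf x$), with $f(\mathbf x)$ the set of all orderings of $(r_1,\dots,r_k)$. Put $A_i=\{\mathbf y\in\mathbb R^2:\ |\|\mathbf y\|_2-r_i|\le\epsilon\}$, i.e. $\mathbf b(\mathbf 0,r_i+\epsilon)\setminus\mathbf b(\mathbf 0,r_i-\epsilon)$. Then $$\mathbb P\big[\Delta_s(f(\mathbf x),F(\mathbf 0))\le\epsilon\big]=\frac{m^k}{k!}e^{-m}\cdot\mathbb P\big[\exists\text{ an ordering }(\tilde{\mathbf X}_1,\dots,\tilde{\mathbf X}_k)\text{ of the visible landmarks at }\mathbf 0\text{ with }\tilde{\mathbf X}_i\in A_i\ \forall i\ \big|\ N_{\mathbf 0}=k\big],$$ i.e. $\frac{m^k}{k!}e^{-m}\,\mathbb E\big[\bigvee_{\mathbf R_0\in F(\mathbf 0)}\prod_{i=1}^k\mathbf 1(\tilde{\mathbf X}_i\in A_i)\,\big|\,N_{\mathbf 0}=k\big]$, where $\mathbf R_0=(\|\tilde{\mathbf X}_1\|_2,\dots,\|\tilde{\mathbf X}_k\|_2)$ and $\bigvee$ is logical OR.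
   Context: Landmarks seen from the origin are the points of a homogeneous Poisson point process $\Phi_{\mathbf 0}$ of intensity $\lambda$ on $\mathbb R^2$; a landmark is visible from $\mathbf 0$ if its distance to $\mathbf 0$ is at most $d_v$, and $N_{\mathbf 0}$ is the number of visible landmarks. The random measurement $F(\mathbf 0)$ is the set of all vectors in $\mathbb R^{N_{\mathbf 0}}$ obtained by listing, in some order, the distances from $\mathbf 0$ to the visible landmarks. For vectors, $\Delta_v(\mathbf u,\mathbf w)=\|\mathbf u-\mathbf w\|_\infty$ if they have the same dimension (equal to $0$ if both are empty) and $\infty$ otherwise; for sets of vectors, $\Delta_s(f,F)=\min_{\mathbf u\in f,\mathbf w\in F}\Delta_v(\mathbf u,\mathbf w)$. $\mathbf b(\mathbf c,\rho)$ denotes the Euclidean ball of radius $\rho$ centred at $\mathbf c$ (empty if $\rho<0$). *)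

(* Defs.v *)
From HB Require Import structures.
From mathcomp Require Import all_boot all_order all_algebra.
From mathcomp Require Import all_classical all_reals all_analysis.
Set Implicit Arguments. Unset Strict Implicit. Unset Printing Implicit Defensive.
Import Order.TTheory GRing.Theory Num.Theory.
Local Open Scope classical_set_scope.
Local Open Scope ring_scope.

Section PPP.
Variable R : realType.

Definition norm2 (y : R * R) : R := Num.sqrt (y.1 ^+ 2 + y.2 ^+ 2).

Definition leb2 : set (R * R) -> \bar R :=
  (@lebesgue_measure R \x @lebesgue_measure R)%E.

Definition bounded2 (B : set (R * R)) : Prop :=
  exists M : R, forall y, B y -> norm2 y <= M.

Definition count_eq (phi : set (R * R)) (B : set (R * R)) (n : nat) : Prop :=
  exists s : seq (R * R), [/\ uniq s, [set` s] = phi `&` B & size s = n].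

Definition is_homogeneous_PPP (d : measure_display) (Omega : measurableType d)
    (P : probability Omega R) (lam : R) (Phi : Omega -> set (R * R)) : Prop :=
  (forall B, measurable B -> bounded2 B -> forall n : nat,
     measurable [set w | count_eq (Phi w) B n] /\
     P [set w | count_eq (Phi w) B n] =
       ((lam * fine (leb2 B)) ^+ n / n`!%:R * expR (- (lam * fine (leb2 B))))%:E)
  /\
  (forall (n : nat) (B : 'I_n -> set (R * R)) (c : 'I_n -> nat),
     (forall i, measurable (B i) /\ bounded2 (B i)) ->
     (forall i j, i != j -> B i `&` B j = set0) ->
     P (\bigcap_(i in [set: 'I_n]) [set w | count_eq (Phi w) (B i) (c i)]) =
       (\prod_(i < n) P [set w | count_eq (Phi w) (B i) (c i)])%E).

Definition visible (dv : R) (phi : set (R * R)) : set (R * R) :=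
  phi `&` [set y | norm2 y <= dv].

Definition N0_eq (dv : R) (phi : set (R * R)) (k : nat) : Prop :=
  count_eq phi [set y | norm2 y <= dv] k.

(* F(0): all listings, in some order, of the distances to visible landmarks *)
Definition Fmeas (dv : R) (phi : set (R * R)) : set (seq R) :=
  [set u | exists s : seq (R * R),
      [/\ uniq s, [set` s] = visible dv phi & u = map norm2 s]].

Definition fmeas (r : seq R) : set (seq R) := [set u | perm_eq u r].

(* Delta_v: sup-norm distance if same dimension (0 if both empty), else +oo *)
Definition Delta_v (u w : seq R) : \bar R :=
  if size u == size w then
    (\big[Num.max/0]_(i < size u) `|u`_i - w`_i|)%:E
  else +oo%E.

(* Delta_s: minimum over pairs (taken as infimum; +oo on empty sets) *)
Definition Delta_s (f F : set (seq R)) : \bar R :=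
  ereal_inf [set Delta_v p.1 p.2 | p in f `*` F].

Definition annulus (eps ri : R) : set (R * R) :=
  [set y | `| norm2 y - ri | <= eps].

Definition condprob (d : measure_display) (Omega : measurableType d)
    (P : probability Omega R) (A B : set Omega) : R :=
  fine (P (A `&` B)) / fine (P B).

End PPP.

(* Main.v *)
Require Import Defs.
From HB Require Import structures.
From mathcomp Require Import all_boot all_order all_algebra.
From mathcomp Require Import all_classical all_reals all_analysis.
From mathcomp Require Import ring lra.
Import Order.TTheory GRing.Theory Num.Theory.
Import numFieldNormedType.Exports.
Local Open Scope classical_set_scope.
Local Open Scope ring_scope.
Lemma int_cos2 (R : realType) (k : R) :
  (\int[lebesgue_measure]_(x in `[(-(pi/2))%R, (pi/2)%R]) (k * (cos x * cos x))%:E = (k / 2 * pi)%:E)%E.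
Proof.
pose F (t : R) := k / 2 * (t + sin t * cos t).
have dF (t : R) : is_derive t (1:R) F (k * (cos t * cos t)).
  have -> : k * (cos t * cos t) = (k/2) *: (1 + (sin t *: (- sin t) + cos t *: cos t)).
    rewrite /GRing.scale /= mulrN -!expr2 sin2cos2.
    by field.
  rewrite /F. apply: is_deriveZ; apply: is_deriveD.
have hpi : -(pi/2) < pi / 2 :> R.
  have := pi_gt0 R; lra.
pose g := fun x : R => k * (cos x * cos x).
have cf : continuous g.
  move=> x; apply: (@continuousM _ _ (fun=> k) (fun x => cos x * cos x)).
    exact: cst_continuous.
  by apply: (@continuousM _ _ cos cos); exact: continuous_cos.
have dLR : derivable_oo_LRcontinuous F (-(pi/2)) (pi/2).
  split.
  + by move=> x _; apply: ex_derive.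
  + apply: cvg_at_right_filter. apply: differentiable_continuous. apply/derivable1_diffP. apply: ex_derive.
  + apply: cvg_at_left_filter. apply: differentiable_continuous. apply/derivable1_diffP. apply: ex_derive.
have dd : {in `](-(pi/2)), (pi/2)[, (F^`())%classic =1 g}.
  move=> x _; rewrite derive1E; exact: derive_val.
have := @continuous_FTC2 R g F _ _ hpi (@continuous_subspaceT _ _ _ g cf) dLR dd.
rewrite /g => ->.
rewrite /F sinN cosN sin_pihalf cos_pihalf; congr (_%:E).
rewrite -mulrBr; congr (_ * _); lra.
Qed.

Lemma int_semicircle (R : realType) (d : R) : 0 < d ->
  (\int[lebesgue_measure]_(x in `[(- d)%R, d]) (2 * Num.sqrt (d ^+ 2 - x ^+ 2))%:E = (pi * d ^+ 2)%:E)%E.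
Proof.
move=> d0.
pose F (t : R) := d * sin t.
pose h := fun x : R => d ^+ 2 - x * x.
pose G := (fun=> (2:R)) \* (Num.sqrt \o h).
have dF (t : R) : is_derive t (1:R) F (d * cos t).
  rewrite /F. apply: is_deriveZ.
have eF : (F^`())%classic = fun x => d * cos x.
  apply/funext => x; rewrite derive1E; exact: derive_val.
have hpi : -(pi/2) < pi / 2 :> R.
  have := pi_gt0 R; lra.
have cF' : continuous (fun x : R => d * cos x).
  move=> x; apply: (@continuousM _ _ (fun=> d) cos).
    exact: cst_continuous.
  exact: continuous_cos.
have cG : continuous G.
  move=> x; apply: (@continuousM _ _ (fun=> 2) (Num.sqrt \o h)).
    exact: cst_continuous.
  apply: continuous_comp; last exact: sqrt_continuous.
  rewrite (_ : h = (fun=> d ^+ 2) - (fun x : R => x * x)); last by apply/funext.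
  apply: continuousB.
    exact: cst_continuous.
  by apply: (@continuousM _ _ id id); exact: cvg_id.
have key (t : R) : 0 <= cos t ->
    2 * Num.sqrt (d ^+ 2 - d * sin t * (d * sin t)) * (d * cos t) = 2 * d ^+ 2 * (cos t * cos t).
  move=> ct.
  have -> : d ^+ 2 - d * sin t * (d * sin t) = (d * cos t) ^+ 2.
    rewrite exprMn cos2sin2; ring.
  rewrite sqrtr_sqr ger0_norm; last by rewrite mulr_ge0 // ltW.
  ring.
have Fa : F (-(pi/2)) = - d by rewrite /F sinN sin_pihalf mulrN1.
have Fb : F (pi/2) = d by rewrite /F sin_pihalf mulr1.
have := @integration_by_substitution_increasing R F G (-(pi/2)) (pi/2) (ltW hpi).
rewrite Fa Fb => ->.
- transitivity (\int[lebesgue_measure]_(x in `[(-(pi/2))%R, (pi/2)%R]) ((2 * d ^+ 2) * (cos x * cos x))%:E)%E; last first.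
    rewrite int_cos2; congr (_%:E); by field.
  apply: eq_integral => x; rewrite inE /= in_itv /= => /andP[xa xb].
  rewrite eF /G /h /F /=. congr (_%:E).
  have cx : 0 <= cos x by apply: cos_ge0_pihalf; rewrite xa xb.
  change (2 * Num.sqrt (d ^+ 2 - d * sin x * (d * sin x)) * (d * cos x) = 2 * d ^+ 2 * (cos x * cos x)).
  exact: key.
- move=> x y xI yI xy; rewrite /F ltr_pM2l // ltr_sin //.
- by rewrite eF => x _; exact: cF'.
- by rewrite eF; apply/cvg_ex; exists (d * cos (-(pi/2))); apply: cvg_at_right_filter; exact: cF'.
- by rewrite eF; apply/cvg_ex; exists (d * cos (pi/2)); apply: cvg_at_left_filter; exact: cF'.
- split.
  + by move=> x _; apply: ex_derive.
  + apply: cvg_at_right_filter. apply: differentiable_continuous. apply/derivable1_diffP. apply: ex_derive.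
  + apply: cvg_at_left_filter. apply: differentiable_continuous. apply/derivable1_diffP. apply: ex_derive.
- exact: (@continuous_subspaceT _ _ _ G cG).
Qed.

Lemma norm2_le (R : realType) (dv x y : R) : 0 <= dv ->
  (norm2 (x, y) <= dv) = (y ^+ 2 <= dv ^+ 2 - x ^+ 2).
Proof.
move=> d0; rewrite /norm2 /=.
rewrite -{1}(ger0_norm d0) -sqrtr_sqr ler_sqrt ?sqr_ge0 //.
apply/idP/idP => H; lra.
Qed.

Lemma leb_section (R : realType) (dv x : R) : 0 < dv ->
  lebesgue_measure (xsection [set y : R * R | norm2 y <= dv] x) =
  (2 * Num.sqrt (dv ^+ 2 - x ^+ 2))%:E.
Proof.
move=> d0.
have [c0|c0] := lerP 0 (dv ^+ 2 - x ^+ 2).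
- set h := Num.sqrt (dv ^+ 2 - x ^+ 2).
  have h0 : 0 <= h by rewrite sqrtr_ge0.
  have -> : xsection [set y : R * R | norm2 y <= dv] x = `[-h, h]%classic.
    apply/seteqP; split => y; rewrite /xsection /= inE /= (norm2_le _ _ _ _ (ltW d0)). 
      by rewrite in_itv /= -ler_norml -sqrtr_sqr ler_sqrt.
    by rewrite in_itv /= -ler_norml -sqrtr_sqr ler_sqrt.
  rewrite lebesgue_measure_itv /= lte_fin.
  have [hp|hn] := ltP (- h) h.
    by congr (_%:E); rewrite opprK; ring.
  have -> : h = 0 by lra.
  by rewrite mulr0.
- have -> : xsection [set y : R * R | norm2 y <= dv] x = set0.
    apply/seteqP; split => y; rewrite /xsection /= inE /= (norm2_le _ _ _ _ (ltW d0)).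
      move=> H; have := sqr_ge0 y; lra.
    by [].
  rewrite measure0; have -> : Num.sqrt (dv ^+ 2 - x ^+ 2) = 0.
    by apply/eqP; rewrite sqrtr_eq0 ltW.
  by rewrite mulr0.
Qed.

Lemma leb2_disk (R : realType) (dv : R) : 0 < dv ->
  leb2 [set y : R * R | norm2 y <= dv] = (pi * dv ^+ 2)%:E.
Proof.
move=> d0.
rewrite /leb2 /product_measure1 /=.
transitivity (\int[lebesgue_measure]_x (2 * Num.sqrt (dv ^+ 2 - x ^+ 2))%:E)%E.
  by apply: eq_integral => x _; rewrite /= leb_section.
rewrite -int_semicircle // [RHS]integral_mkcond.
apply: eq_integral => x _; rewrite patchE.
case: ifPn => // /negP xI.
have : dv ^+ 2 - x ^+ 2 < 0.
  have : x < - dv \/ dv < x.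
    have [H1|H1] := ltP x (- dv); first by left.
    have [H2|H2] := ltP dv x; first by right.
    by exfalso; apply: xI; rewrite inE /= in_itv /= H1 H2.
  case=> H; nra.
move=> H; have -> : Num.sqrt (dv ^+ 2 - x ^+ 2) = 0.
  by apply/eqP; rewrite sqrtr_eq0 ltW.
by rewrite mulr0.
Qed.

Lemma measurable_norm2 (R : realType) : measurable_fun setT (@norm2 R).
Proof.
have -> : @norm2 R = Num.sqrt \o (fun y : R * R => y.1 * y.1 + y.2 * y.2).
  by apply/funext => y; rewrite /norm2 /= !expr2.
apply: measurableT_comp; first exact: measurable_realfun.continuous_measurable_fun (@sqrt_continuous R).
apply: measurable_realfun.measurable_funD; apply: measurable_realfun.measurable_funM; first [exact: measurable_fst | exact: measurable_snd].
Qed.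

Lemma measurable_le (d : measure_display) (T : measurableType d) (R : realType)
  (f : T -> R) (c : R) : measurable_fun setT f -> measurable [set y | f y <= c].
Proof.
move=> mf; have := mf measurableT _ (@measurable_itv R `]-oo, c]); rewrite setTI.
congr measurable; apply/seteqP; split => y /=; rewrite in_itv /= //.
Qed.

Lemma measurable_annulus (R : realType) (eps ri : R) : measurable (annulus eps ri).
Proof.
apply: measurable_le.
have -> : (fun y => `|norm2 y - ri|) = (fun z : R => `|z - ri|) \o (@norm2 R) by [].
apply: measurableT_comp; last exact: measurable_norm2.
apply: measurable_realfun.continuous_measurable_fun => z.
apply: (@continuous_comp _ _ _ (fun z : R => z - ri) (@Num.norm _ R)).
  apply: (@continuousB _ _ _ id (fun=> ri)); [exact: cvg_id | exact: cst_continuous].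
exact: norm_continuous.
Qed.

Lemma measurable_disk (R : realType) (dv : R) : measurable [set y : R * R | norm2 y <= dv].
Proof. apply: measurable_le; exact: measurable_norm2. Qed.
Local Open Scope ring_scope.
Lemma rank_lt (T : eqType) (t : seq T) (t0 : T) (i : nat) : (i < size t)%N ->
  (count (pred1 (nth t0 t i)) (take i t) < count (pred1 (nth t0 t i)) t)%N.
Proof.
move=> it.
rewrite -[X in (_ < count _ X)%N](cat_take_drop i t) count_cat (drop_nth t0 it) /= eqxx.
by rewrite add1n addnS ltnS leq_addr.
Qed.

Lemma rank_inj (T : eqType) (t : seq T) (t0 : T) (i j : nat) : (i < j)%N -> (j < size t)%N ->
  nth t0 t i = nth t0 t j ->
  (count (pred1 (nth t0 t i)) (take i t) < count (pred1 (nth t0 t i)) (take j t))%N.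
Proof.
move=> ij jt e.
have it : (i < size t)%N by apply: ltn_trans jt.
have -> : j = (i.+1 + (j - i.+1))%N by rewrite subnKC.
rewrite takeD count_cat (take_nth t0 it) -cats1 count_cat /= eqxx.
by rewrite addn0 addn1 addSn ltnS leq_addr.
Qed.

Lemma rank_surj (T : eqType) (t : seq T) (t0 x : T) (p : nat) :
  (p < count (pred1 x) t)%N ->
  exists i, [/\ (i < size t)%N, nth t0 t i = x & count (pred1 x) (take i t) = p].
Proof.
elim: t p => [|a t IH] p //=.
case: eqP => [ax|ax].
  case: p => [|p].
    by move=> _; exists 0%N; split => //; rewrite take0.
  rewrite add1n ltnS => /IH [i [it ni ci]].
  by exists i.+1; split => //=; rewrite ax eqxx ci.
rewrite add0n => /IH [i [it ni ci]].
exists i.+1; split => //=.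
by case: eqP => // /esym; rewrite ci.
Qed.

Definition typ_of (R : realType) (eps : R) (r : seq R) (y : R * R) : {ffun 'I_(size r) -> bool} :=
  [ffun i : 'I_(size r) => `[< annulus eps r`_i y >]].

Definition Rg (R : realType) (dv eps : R) (r : seq R) (t : {ffun 'I_(size r) -> bool}) : set (R * R) :=
  [set y | norm2 y <= dv /\ typ_of _ eps r y = t].

Lemma asbool_eqb (P : Prop) (b : bool) : `[< P >] = b <-> (if b then P else ~ P).
Proof.
case: b; case: (asboolP P) => [p|np]; split => //.
Qed.

Lemma measurable_Rg (R : realType) (dv eps : R) (r : seq R) (t : {ffun 'I_(size r) -> bool}) :
  measurable (Rg _ dv eps r t).
Proof.
have -> : Rg _ dv eps r t = [set y : R * R | norm2 y <= dv] `&`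
    \bigcap_(i in [set: 'I_(size r)]) (if t i then annulus eps r`_i else ~` annulus eps r`_i).
  apply/seteqP; split => y [dy H]; split => //.
    move=> i _; have := congr1 (fun f : {ffun 'I_(size r) -> bool} => f i) H; rewrite ffunE => /asbool_eqb.
    by case: (t i).
  apply/ffunP => i; rewrite ffunE; apply/asbool_eqb.
  by have := H i I; case: (t i).
apply: measurableI; first exact: measurable_disk.
apply: fin_bigcap_measurable; first exact: finite_finset.
move=> i _; case: (t i); first exact: measurable_annulus.
apply: measurableC; exact: measurable_annulus.
Qed.

Lemma measurable_E (R : realType) (d : measure_display) (Omega : measurableType d)
  (Phi : Omega -> set (R * R)) (dv eps : R) (r : seq R) :
  (forall B, measurable B -> bounded2 B -> forall n : nat,
     measurable [set w | count_eq (Phi w) B n]) ->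
  measurable [set w | exists s : seq (R * R),
    [/\ uniq s, [set` s] = visible dv (Phi w), size s = size r &
        forall i, (i < size r)%N -> annulus eps r`_i (nth (0, 0) s i)]].
Proof.
move=> Hc.
pose T := {ffun 'I_(size r) -> bool}.
pose G := [set ts : (size r).-tuple T | forall i : 'I_(size r), tnth ts i i].
pose C (ts : (size r).-tuple T) (t : T) :=
  [set w | count_eq (Phi w) (Rg _ dv eps r t) (count (pred1 t) ts)].
suff -> : [set w | exists s : seq (R * R),
    [/\ uniq s, [set` s] = visible dv (Phi w), size s = size r &
        forall i, (i < size r)%N -> annulus eps r`_i (nth (0, 0) s i)]] =
  \bigcup_(ts in G) \bigcap_(t in [set: T]) C ts t.
  apply: fin_bigcup_measurable; first exact: finite_finset.
  move=> ts _; apply: fin_bigcap_measurable; first exact: finite_finset.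
  move=> t _; apply: Hc; first exact: measurable_Rg.
  by exists dv => y [].
apply/seteqP; split => w.
- case=> s [us ss szs As].
  have szm : size (map (typ_of _ eps r) s) == size r by rewrite size_map szs.
  exists (Tuple szm).
    move=> i; rewrite (tnth_nth (typ_of _ eps r (0, 0))) /= (nth_map (0, 0)) ?szs // ffunE.
    by apply/asboolP; apply: As.
  move=> t _; exists [seq y <- s | typ_of _ eps r y == t]; split.
  + exact: filter_uniq.
  + apply/seteqP; split => y /=; rewrite mem_filter.
      case/andP => /eqP ty ys.
      have : [set` s] y by [].
      by rewrite ss => -[Py dy]; split => //; split.
    case=> Py [dy ty]; rewrite ty eqxx /=.
    have : visible dv (Phi w) y by split.
    by rewrite -ss.
  + by rewrite size_filter /= count_map.
- case=> ts Gts /= Hts.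
  have : forall t : T, exists l : seq (R * R), [/\ uniq l,
      [set` l] = Phi w `&` Rg _ dv eps r t & size l = count (pred1 t) ts].
    move=> t; exact: (Hts t I).
  case/choice => l Hl.
  pose t0 : T := [ffun=> false].
  pose tsq : seq T := ts.
  have szt : size tsq = size r := size_tuple ts.
  have rklt i : (i < size r)%N ->
      (count (pred1 (nth t0 tsq i)) (take i tsq) < size (l (nth t0 tsq i)))%N.
    move=> ir; have [_ _ ->] := Hl (nth t0 tsq i); apply: rank_lt; by rewrite szt.
  pose s := [seq nth (0, 0) (l (nth t0 tsq i)) (count (pred1 (nth t0 tsq i)) (take i tsq))
             | i <- iota 0 (size r)].
  have ns i : (i < size r)%N -> nth (0, 0) s i =
      nth (0, 0) (l (nth t0 tsq i)) (count (pred1 (nth t0 tsq i)) (take i tsq)).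
    by move=> ir; rewrite (nth_map 0%N) ?size_iota // nth_iota.
  have sin i : (i < size r)%N -> (Phi w `&` Rg _ dv eps r (nth t0 tsq i)) (nth (0, 0) s i).
    move=> ir; have [_ <- _] := Hl (nth t0 tsq i); rewrite ns //=.
    exact: mem_nth (rklt i ir).
  exists s; split.
  + apply/(uniqP (0, 0)) => i j; rewrite !inE size_map size_iota => ir jr e.
    have [_ [_ ti]] := sin i ir; have [_ [_ tj]] := sin j jr.
    have tij : nth t0 tsq i = nth t0 tsq j by rewrite -ti -tj e.
    have [ul _ _] := Hl (nth t0 tsq i).
    have erk : count (pred1 (nth t0 tsq i)) (take i tsq) =
               count (pred1 (nth t0 tsq i)) (take j tsq).
      apply: (uniqP (0, 0) ul); rewrite ?inE; first exact: rklt.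
        by rewrite tij; exact: rklt.
      by rewrite -ns // e ns // tij.
    have it : (i < size tsq)%N by rewrite szt.
    have jt : (j < size tsq)%N by rewrite szt.
    have [ij|ji|//] := ltngtP i j.
      by have := rank_inj _ _ t0 _ _ ij jt tij; rewrite erk ltnn.
    have := rank_inj _ _ t0 _ _ ji it (esym tij).
    by rewrite -tij erk ltnn.
  + apply/seteqP; split => y /=.
      move/(nthP (0, 0)) => [i]; rewrite size_map size_iota => ir <-.
      by have [Py [dy _]] := sin i ir; split.
    case=> Py dy.
    pose x := typ_of _ eps r y.
    have yl : y \in l x.
      have [_ e _] := Hl x.
      have : (Phi w `&` Rg _ dv eps r x) y by split.
      by rewrite -e.
    have := index_mem y (l x); rewrite yl => il.
    have [_ _ szl] := Hl x; rewrite szl in il.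
    have [i [it ni ci]] := rank_surj _ _ t0 _ _ il.
    apply/(nthP (0, 0)); exists i; first by rewrite size_map size_iota -szt.
    by rewrite ns -?szt // ni ci nth_index.
  + by rewrite size_map size_iota.
  + move=> i ir; have [_ [_ ti]] := sin i ir.
    have := Gts (Ordinal ir); rewrite (tnth_nth t0) /= -ti ffunE.
    by move/asboolP.
Qed.
Local Open Scope ring_scope.
Lemma ereal_inf_fin (R : realType) (S : set (\bar R)) (L : seq (\bar R)) (x : R) :
  S `<=` [set` L] -> (ereal_inf S <= x%:E)%E -> exists2 y, S y & (y <= x%:E)%E.
Proof.
move=> SL Hinf.
have [z [xz zL]] : exists z, (x%:E < z)%E /\
    forall y, y \in L -> (x%:E < y)%E -> (z <= y)%E.
  elim: L {SL} => [|a L [z [xz zL]]].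
    by exists +oo%E; split => //; rewrite ltry.
  have [xa|ax] := ltP x%:E a.
    exists (Order.min a z); split; first by rewrite lt_min xa xz.
    move=> y; rewrite in_cons => /orP[/eqP->|yL] xy; first by rewrite ge_min lexx.
    by rewrite ge_min (zL y yL xy) orbT.
  exists z; split => // y; rewrite in_cons => /orP[/eqP->|yL] xy.
    by exfalso; move: (lt_le_trans xy ax); rewrite ltxx.
  exact: zL.
apply: contrapT => H.
have : (z <= ereal_inf S)%E.
  apply: le_ereal_inf_tmp => y Sy.
  have [xy|yx] := ltP x%:E y; first exact: zL (SL _ Sy) xy.
  by exfalso; apply: H; exists y.
move=> zi; have := le_trans zi Hinf; rewrite leNgt xz //.
Qed.

Lemma perm_fst (T U : eqType) (z : seq (U * T)) (t : seq U) :
  perm_eq (map fst z) t -> exists z', perm_eq z z' /\ map fst z' = t.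
Proof.
elim: t z => [|a t IH] z.
  move=> /perm_size; rewrite size_map /=; case: z => // _.
  by exists [::].
move=> pz.
have : a \in map fst z by rewrite (perm_mem pz) mem_head.
case/mapP => e ez ea.
have pze := perm_to_rem ez.
have : perm_eq (map fst (rem e z)) t.
  rewrite -(perm_cons a); apply: perm_trans pz.
  rewrite ea -/(map fst (e :: rem e z)) perm_sym; exact: perm_map.
case/IH => z'' [p1 p2].
exists (e :: z''); split; last by rewrite /= p2 ea.
apply: perm_trans pze _; by rewrite perm_cons.
Qed.

Lemma delta_iff (R : realType) (dv eps : R) (phi : set (R * R)) (r : seq R) : 0 <= eps ->
  (Delta_s (fmeas r) (Fmeas dv phi) <= eps%:E)%E <->
  exists s : seq (R * R), [/\ uniq s, [set` s] = visible dv phi, size s = size r &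
      forall i, (i < size r)%N -> annulus eps r`_i (nth (0, 0) s i)].
Proof.
move=> e0; split; last first.
  case=> s [us ss szs As]; rewrite /Delta_s; apply: ge_ereal_inf.
  exists (Delta_v r (map (@norm2 R) s)).
    exists (r, map (@norm2 R) s) => //; split => /=; first exact: perm_refl.
    by exists s; split.
  rewrite /Delta_v size_map szs eqxx lee_fin; apply: bigmax_le => // i _.
  by rewrite (nth_map (0, 0)) ?szs // distrC; exact: As.
move=> H.
have [[v [s0 [us0 ss0 v0]]] | nF] := pselect (exists v, Fmeas dv phi v); last first.
  have [] := @ereal_inf_fin R _ [::] eps _ H.
    by move=> y [[u w] [_ Fw] _]; exfalso; apply: nF; exists w.
  by move=> y [[u w] [_ Fw] _]; exfalso; apply: nF; exists w.
pose L := [seq Delta_v p.1 p.2 | p <- [seq (u, w) | u <- permutations r, w <- permutations v]].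
have SL : [set Delta_v p.1 p.2 | p in fmeas r `*` Fmeas dv phi] `<=` [set` L].
  move=> y [[u w] [/= fu [s [us ss ->]]] <-] /=.
  change ((fun p => Delta_v p.1 p.2) (u, map (@norm2 R) s) \in L).
  apply: map_f; apply: allpairs_f; first by rewrite mem_permutations.
  rewrite mem_permutations v0; apply: perm_map; apply: uniq_perm => // p.
  have e : [set` s] = [set` s0] by rewrite ss ss0.
  apply/idP/idP => Hp.
    by have : [set` s0] p by rewrite -e.
  by have : [set` s] p by rewrite e.
have [y [[u w] [/= fu [s [us ss wE]]] <-] yle] := ereal_inf_fin _ _ _ _ SL H.
move: yle; rewrite /Delta_v; case: eqP => szuw; last by rewrite leNgt ltey.
rewrite lee_fin => yle.
have uw i : (i < size u)%N -> `|u`_i - w`_i| <= eps.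
  move=> iu; apply: le_trans yle.
  exact: (@le_bigmax _ _ _ 0 (fun j : 'I_(size u) => `|u`_j - w`_j|) (Ordinal iu)).
have szs : size s = size u by rewrite szuw wE size_map.
pose z := zip u s.
have fz : map fst z = u by rewrite /z -/(unzip1 _) unzip1_zip // szs.
have sz : map snd z = s by rewrite /z -/(unzip2 _) unzip2_zip // szs.
have allz : all (fun p => `|norm2 p.2 - p.1| <= eps) z.
  apply/(all_nthP (0, (0, 0))) => j; rewrite size_zip szs minnn => ju.
  rewrite nth_zip //= distrC.
  by have := uw j ju; rewrite wE (nth_map (0, 0)) // szs.
have fu' : perm_eq (map fst z) r by rewrite fz.
have [z' [pz fz']] := perm_fst _ _ _ _ fu'.
exists (map snd z'); split.
- by rewrite -(perm_uniq (perm_map snd pz)) sz.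
- rewrite -ss; apply/seteqP; split => p /=.
    by rewrite -(perm_mem (perm_map snd pz)) sz.
  by rewrite -(perm_mem (perm_map snd pz)) sz.
- by rewrite size_map -fz' size_map.
- move=> i ir.
  have iz : (i < size z')%N by rewrite -fz' size_map in ir.
  have allz' : all (fun p => `|@norm2 R p.2 - p.1| <= eps) z' by rewrite -(perm_all _ pz).
  have := (all_nthP (0, (0, 0)) allz' i iz).
  suff -> : r`_i = (nth (0, (0, 0)) z' i).1.
    by rewrite /annulus /= (nth_map (0, (0, 0))).
  by rewrite -fz' (nth_map (0, (0, 0))).
Qed.

Theorem lemma9 (R : realType) (d : measure_display) (Omega : measurableType d)
    (P : probability Omega R) (lam dv eps : R) (Phi : Omega -> set (R * R))
    (r : seq R) :
  0 < lam -> 0 < dv -> 0 <= eps ->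
  is_homogeneous_PPP P lam Phi ->
  (forall i, (i < size r)%N -> 0 <= r`_i) ->
  let m := lam * pi * dv ^+ 2 in
  let k := size r in
  P [set w | (Delta_s (fmeas r) (Fmeas dv (Phi w)) <= eps%:E)%E] =
    (m ^+ k / k`!%:R * expR (- m) *
     condprob P
       [set w | exists s : seq (R * R),
          [/\ uniq s, [set` s] = visible dv (Phi w), size s = k &
              forall i, (i < k)%N -> annulus eps r`_i (nth (0, 0) s i)]]
       [set w | N0_eq dv (Phi w) k])%:E.
Proof.
move=> lam0 dv0 eps0 [Hcnt _] rpos m k.
have mE := @measurable_E R d Omega Phi dv eps r (fun B mB bB n => (Hcnt B mB bB n).1).
have LE : [set w | (Delta_s (fmeas r) (Fmeas dv (Phi w)) <= eps%:E)%E] =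
    [set w | exists s : seq (R * R),
          [/\ uniq s, [set` s] = visible dv (Phi w), size s = k &
              forall i, (i < k)%N -> annulus eps r`_i (nth (0, 0) s i)]].
  by apply/seteqP; split => w /= H; apply/(delta_iff _ _ _ _ _ eps0).
rewrite LE.
have bD : bounded2 [set y : R * R | norm2 y <= dv] by exists dv => y.
have [_ PN] := Hcnt _ (measurable_disk _ dv) bD k.
rewrite leb2_disk // /= mulrA -/m in PN.
have PN' : P [set w | N0_eq dv (Phi w) k] = (m ^+ k / k`!%:R * expR (- m))%:E by exact: PN.
rewrite /condprob setIidl; last first.
  by move=> w [s [us ss szs _]]; exists s; split.
rewrite PN' /=.
have m0 : 0 < m by rewrite /m mulr_gt0 ?exprn_gt0 ?mulr_gt0 ?pi_gt0.
have c0 : m ^+ k / k`!%:R * expR (- m) != 0.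
  by rewrite gt_eqF // mulr_gt0 ?expR_gt0 // divr_gt0 ?exprn_gt0 // ltr0n fact_gt0.
rewrite mulrC divfK // fineK //.
exact: fin_num_measure.
Qed.
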